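(* For all $N\in\mathbb{N}$, $$\#\{(q_1,q_2)\in(\tfrac12\mathbb{Z})^2\mid 4q_1^2+4q_2^2+q_1-q_2=N\}=\frac14\,\#\{(x,y)\in\mathbb{Z}^2\mid x^2+y^2=8N+1\}.$$
   Context: In type $C_2^{(1)}$, with coweight lattice $L=\{\sqrt2q_1\varepsilon_1+\sqrt2q_2\varepsilon_2\mid q_1,q_2\in\frac12\mathbb{Z}\}$, the quantity $4q_1^2+4q_2^2+q_1-q_2$ is the $\Lambda_1$-atomic length $\mathcal{L}_{\Lambda_1}(t_q)=\langle\Lambda_1-t_q\Lambda_1,\rho^\vee\rangle$ of $q=\sqrt2q_1\varepsilon_1+\sqrt2q_2\varepsilon_2$; so the left-hand side is $|\widehat{\mathcal{B}_1}(N)|$, the number of $q\in L$ with $\mathcal{L}_{\Lambda_1}(t_q)=N$. *)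

(* Defs.v *)
From mathcomp Require Import all_boot all_order all_algebra.
Set Implicit Arguments. Unset Strict Implicit. Unset Printing Implicit Defensive.
Import Order.TTheory GRing.Theory Num.Theory.
Local Open Scope ring_scope.

Definition card_is (T : eqType) (P : T -> Prop) (n : nat) : Prop :=
  exists s : seq T, [/\ uniq s, (forall x, x \in s <-> P x) & size s = n].

Definition half_int (q : rat) : Prop := exists z : int, q = z%:~R / 2.

(* Main.v *)
Require Import Defs.
From mathcomp Require Import all_boot all_order all_algebra.
From mathcomp Require Import zify ring lra.
Import Order.TTheory GRing.Theory Num.Theory.
Local Open Scope ring_scope.

Definition rng (M : nat) : seq int := [seq (i%:Z - M%:Z) | i <- iota 0 (2 * M).+1].

Lemma rng_uniq M : uniq (rng M).
Proof.
rewrite map_inj_uniq ?iota_uniq // => i j /eqP; rewrite subr_eq addrNK => /eqP.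
by case.
Qed.

Lemma mem_rng M x : (x \in rng M) = (- M%:Z <= x <= M%:Z).
Proof.
apply/mapP/idP.
  by case=> i; rewrite mem_iota => /andP [_ Hi] ->; lia.
move=> Hx; case E: (x + M%:Z) => [n|n]; last by lia.
exists n; last by lia.
rewrite mem_iota; lia.
Qed.

Definition sol (N : nat) (p : int * int) : bool :=
  p.1 ^+ 2 + p.2 ^+ 2 == (8 * N + 1)%:R.

Definition Aseq (N : nat) : seq (int * int) :=
  [seq p <- [seq (x, y) | x <- rng (8 * N + 1), y <- rng (8 * N + 1)]
     | [&& sol N p, (4 %| p.1 - 1)%Z & (4 %| p.2)%Z]].

Lemma bound N x y : x ^+ 2 + y ^+ 2 = (8 * N + 1)%:R ->
  - (8 * N + 1)%:Z <= x <= (8 * N + 1)%:Z.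
Proof. rewrite !expr2 => H; nia. Qed.

Lemma memA N p : (p \in Aseq N) <->
  [/\ sol N p, exists k : int, p.1 = 4 * k + 1 & exists l : int, p.2 = 4 * l].
Proof.
case: p => x y /=; rewrite mem_filter; split.
  case/andP=> /and3P [Hs Hk Hl] _; split => //.
    by exists ((x - 1) %/ 4)%Z; lia.
  by exists (y %/ 4)%Z; lia.
case=> Hs [k Hk] [l Hl]; apply/andP; split.
  by rewrite Hs /=; apply/andP; split; lia.
apply/allpairsP; exists (x, y) => /=.
move/eqP: Hs => Hs.
have := @bound N _ _ Hs; rewrite addrC in Hs; have := @bound N _ _ Hs.
by rewrite !mem_rng => -> ->.
Qed.

Lemma A_uniq N : uniq (Aseq N).
Proof. by apply: filter_uniq; apply: allpairs_uniq; rewrite ?rng_uniq // => -[a b] [c d] _ _. Qed.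

Definition g (i : nat) (p : int * int) : int * int :=
  match i with 0 => p | 1 => (- p.1, p.2) | 2 => (p.2, p.1) | _ => (p.2, - p.1) end.

Definition h (p : int * int) : rat * rat :=
  (((p.1 - 1 + p.2)%:~R / 8), ((p.2 - p.1 + 1)%:~R / 8)).

Lemma classes (x y : int) (N : nat) : x ^+ 2 + y ^+ 2 = (8 * N + 1)%:R ->
 [\/ (4 %| x-1)%Z /\ (4 %| y)%Z, (4 %| -x-1)%Z /\ (4 %| y)%Z, (4 %| y-1)%Z /\ (4 %| x)%Z | (4 %| -y-1)%Z /\ (4 %| x)%Z].
Proof.
rewrite !expr2 => H.
have [k [r [Ex Hr]]] : exists k r : int, x = 4 * k + r /\ 0 <= r < 4 by exists (x %/ 4)%Z, (x %% 4)%Z; lia.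
have [l [s [Ey Hs]]] : exists k r : int, y = 4 * k + r /\ 0 <= r < 4 by exists (y %/ 4)%Z, (y %% 4)%Z; lia.
subst x y.
have H' : 16 * (k * k) + 8 * (k * r) + r * r + 16 * (l * l) + 8 * (l * s) + s * s = (8 * N + 1)%:R by rewrite -H; ring.
clear H; move: H'; generalize (k * k) (l * l) => K L.
have : (r = 0 \/ r = 1 \/ r = 2 \/ r = 3) by lia.
have : (s = 0 \/ s = 1 \/ s = 2 \/ s = 3) by lia.
move=> [->|[->|[->|->]]] [->|[->|[->|->]]] H'; rewrite ?(mulr0, mulr1, mul0r) in H' *.
all: first [ by exfalso; lia | by constructor 1; lia | by constructor 2; lia | by constructor 3; lia | by constructor 4; lia].
Qed.

Lemma h_inj : injective h.
Proof.
move=> [x y] [x' y'] [] /(congr1 (fun r => r * 8)) E1 /(congr1 (fun r => r * 8)) E2.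
rewrite !divfK // in E1 E2.
move/eqP: E1; rewrite eqr_int => /eqP E1.
move/eqP: E2; rewrite eqr_int => /eqP E2.
have -> : x = x' by lia.
have -> : y = y' by lia.
by [].
Qed.

Theorem corollary8p13 (N : nat) :
  exists m k : nat,
    [/\ card_is (fun q : rat * rat =>
           [/\ half_int q.1, half_int q.2 &
               4 * q.1 ^+ 2 + 4 * q.2 ^+ 2 + q.1 - q.2 = N%:R]) m,
        card_is (fun p : int * int => p.1 ^+ 2 + p.2 ^+ 2 = (8 * N + 1)%:R) k
      & (4 * m)%N = k].
Proof.
exists (size (Aseq N)), (4 * size (Aseq N))%N; split => //.
- exists (map h (Aseq N)); split; last by rewrite size_map.
    by rewrite map_inj_uniq ?A_uniq //; apply: h_inj.
  move=> [q1 q2]; split.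
    case/mapP=> -[x y] /memA [/eqP /= Hs [k Hk] [l Hl]] [-> ->] /=.
    rewrite /= in Hk Hl; subst x y.
    have HN : N%:Z = 2 * (k * k) + k + 2 * (l * l).
      by rewrite !expr2 in Hs; lia.
    split.
    + by exists (k + l); field.
    + by exists (l - k); field.
    + have -> : (N%:R : rat) = (N%:Z)%:~R by [].
      by rewrite HN; field.
  case=> /= [[a ->] [b ->] E].
  have H : ((2 * (a * a) + 2 * (b * b) + a - b - 2 * N%:Z)%:~R : rat) = 0.
    apply: etrans (_ : 2 * (4 * (a%:~R / 2) ^+ 2 + 4 * (b%:~R / 2) ^+ 2 + a%:~R / 2 - b%:~R / 2 - N%:R) = 0).
      by field.
    by rewrite E subrr mulr0.
  move/eqP: H; rewrite intr_eq0 => /eqP H.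
  apply/mapP; exists (2 * a - 2 * b + 1, 2 * a + 2 * b).
    apply/memA; split => /=.
    + apply/eqP.
      have -> : (2 * a - 2 * b + 1) ^+ 2 + (2 * a + 2 * b) ^+ 2 = 4 * (2 * (a * a) + 2 * (b * b) + a - b) + 1 by ring.
      lia.
    + by exists (N%:Z - a * a - b * b); lia.
    + by exists (N%:Z - a * a - b * b + b); lia.
  rewrite /h /=; by congr pair; field.
- exists (allpairs g (iota 0 4) (Aseq N)).
  split; last by rewrite size_allpairs.
  + apply: allpairs_uniq; rewrite ?iota_uniq ?A_uniq //.
    move=> [i p] [j p'] /allpairsP [[i0 p0] [Hi Hp [-> ->]]] /allpairsP [[j0 p1] [Hj Hp1 [-> ->]]] /=.
    case: p0 Hi Hp => x y Hi /memA [_ /= [k Hk] [l Hl]].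
    case: p1 Hj Hp1 => x' y' Hj /memA [_ /= [k' Hk'] [l' Hl']].
    move: Hi Hj => /= Hi Hj; rewrite !inE in Hi Hj.
    have : (i0 = 0 \/ i0 = 1 \/ i0 = 2 \/ i0 = 3)%N by lia.
    have : (j0 = 0 \/ j0 = 1 \/ j0 = 2 \/ j0 = 3)%N by lia.
    move=> [->|[->|[->|->]]] [->|[->|[->|->]]] /= [E1 E2].
    all: try by exfalso; lia.
    - by rewrite E1 E2.
    - have ex : x = x' by lia.
      by rewrite ex E2.
    - by rewrite E1 E2.
    - have ex : x = x' by lia.
      by rewrite ex E1.
  + move=> [x y]; split.
      move=> /allpairsP [[i0 [a b]] [Hi /memA [/eqP /= Hs _ _] E]].
      rewrite /= !inE in Hi.
      have : (i0 = 0 \/ i0 = 1 \/ i0 = 2 \/ i0 = 3)%N by lia.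
      move=> [Ei|[Ei|[Ei|Ei]]]; rewrite Ei /= in E; case: E => -> ->; rewrite /= ?sqrrN; first [exact Hs | by rewrite addrC].
    move=> Hs; apply/allpairsP.
    case: (@classes x y N Hs) => -[H1 H2].
    * exists (0%N, (x, y)); split => //; apply/memA; split.
      - exact/eqP.
      - by exists ((x - 1) %/ 4)%Z => /=; lia.
      - by exists (y %/ 4)%Z => /=; lia.
    * exists (1%N, (- x, y)); split => //=; last by rewrite opprK.
      apply/memA; split.
      - by apply/eqP; rewrite /= sqrrN.
      - by exists ((- x - 1) %/ 4)%Z => /=; lia.
      - by exists (y %/ 4)%Z => /=; lia.
    * exists (2%N, (y, x)); split => //=.
      apply/memA; split.
      - by apply/eqP; rewrite /= addrC.
      - by exists ((y - 1) %/ 4)%Z => /=; lia.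
      - by exists (x %/ 4)%Z => /=; lia.
    * exists (3%N, (- y, x)); split => //=; last by rewrite opprK.
      apply/memA; split.
      - by apply/eqP; rewrite /= sqrrN addrC.
      - by exists ((- y - 1) %/ 4)%Z => /=; lia.
      - by exists (x %/ 4)%Z => /=; lia.
Qed.
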